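(* Let $m\ge1$ divide $n$, let $\epsilon_m=e^{2\pi\sqrt{-1}/m}$ and $\Psi_m(X_0,\dots,X_{m-1})=\prod_{i\in(\mathbb Z/m\mathbb Z)^\times}\bigl(\sum_{j\in\mathbb Z/m\mathbb Z}\epsilon_m^{ij}X_j\bigr)$. Let $S_n$ act on $\mathbb C[X_0,\dots,X_{n-1}]$ by permuting the indices $\{0,\dots,n-1\}$ (i.e. $\sigma(X_j)=X_{\sigma(j)}$), and similarly $S_m$ on $\mathbb C[X_0,\dots,X_{m-1}]$. Let $Y_i=\sum_{j=0}^{n/m-1}X_{i+mj}$ for $0\le i\le m-1$. Then \[ \mathrm{Stab}\bigl(\Psi_m(Y_0,\dots,Y_{m-1})\bigr)=\mathrm{Stab}(\Psi_m)\wr S_{n/m}, \] where stabilizers are taken in $S_n$ and $S_m$ respectively.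
   Context: For a subgroup $G\le S_m$ (acting on $\{0,\dots,m-1\}$), $G\wr S_{n/m}$ denotes the subgroup of $S_n$ consisting of the permutations $(\sigma;\sigma_0,\dots,\sigma_{m-1})$ with $\sigma\in G$ and $\sigma_i\in S_{n/m}$ (acting on $\{0,\dots,n/m-1\}$), where $(\sigma;\sigma_0,\dots,\sigma_{m-1})$ maps $i+mj$ to $\sigma(i)+m\sigma_i(j)$ for $0\le i\le m-1$, $0\le j\le n/m-1$. $\mathrm{Stab}(F)$ denotes the set of permutations fixing the polynomial $F$. *)

(* Defs.v *)
From HB Require Import structures.
From mathcomp Require Import all_boot all_order all_algebra all_fingroup all_field.
From mathcomp Require Import mpoly.
Set Implicit Arguments. Unset Strict Implicit. Unset Printing Implicit Defensive.
Import GRing.Theory Num.Theory.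
Local Open Scope ring_scope.

(* eps_m = e^{2 pi i / m}: m.-root (-1) is the m-th root of -1 with minimal
   non-negative argument, i.e. e^{i pi / m}; its square is e^{2 pi i / m}. *)
Definition eps (m : nat) : algC := (m.-root (-1)) ^+ 2.

Definition Psi (m : nat) : {mpoly algC[m]} :=
  \prod_(i < m | coprime i m) \sum_(j < m) (eps m ^+ (i * j)) *: 'X_j.

(* Y_i = sum_{j=0}^{n/m-1} X_{i+mj}, i.e. the sum of X_k over the k < n with
   k = i mod m (for m | n). *)
Definition Y (m n : nat) (i : 'I_m) : {mpoly algC[n]} :=
  \sum_(k < n | (k %% m == i)%N) 'X_k.

Definition PsiY (m n : nat) : {mpoly algC[n]} :=
  Psi m \mPo (mktuple (fun i : 'I_m => @Y m n i)).

Definition Stab (k : nat) (F : {mpoly algC[k]}) : {set 'S_k} :=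
  [set s : 'S_k | msym s F == F].

Definition wreath (m n : nat) (G : {set 'S_m}) : {set 'S_n} :=
  [set s : 'S_n | [exists sig : 'S_m, exists tau : {ffun 'I_m -> 'S_(n %/ m)},
     (sig \in G) &&
     [forall i : 'I_m, forall j : 'I_(n %/ m), forall k : 'I_n,
        (val k == i + m * j)%N ==>
        (val (s k) == val (sig i) + m * val (tau i j))%N]]].

(* Main.v *)
Require Import Defs.
From mathcomp Require Import all_boot all_order all_algebra all_fingroup all_field.
From mathcomp Require Import mpoly.
From mathcomp Require Import ring.
Set Implicit Arguments. Unset Strict Implicit. Unset Printing Implicit Defensive.
Import Order.TTheory GRing.Theory Num.Theory.
Local Open Scope ring_scope.

Lemma norm1_sub1 (x : algC) : `|x| = 1 -> `|x - 1| ^+ 2 = 2 - 2 * 'Re x.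
Proof.
move=> hx; have h : x^* * x = 1 by rewrite -normCKC hx expr1n.
rewrite normCKC rmorphB rmorph1 ReE.
transitivity (x^* * x - x^* - x + 1); first by ring.
rewrite h; field.
by [].
Qed.

Lemma geom_split (v : algC) q : (0 < q)%N ->
  \sum_(l < q) v ^+ l = 1 + v * \sum_(l < q.-1) v ^+ l.
Proof.
case: q => // q _; rewrite big_ord_recl expr0 mulr_sumr; congr (_ + _).
by apply: eq_bigr => i _; rewrite exprS.
Qed.

Lemma strict_root (q : nat) (z : algC) : (1 < q)%N -> `|z| = 1 -> z != 1 ->
  exists v, v ^+ q = z /\ 'Re z < 'Re v.
Proof.
move=> hq hz hz1; have q0 : (0 < q)%N by apply: ltnW.
have z0 : z != 0 by apply/eqP => h; move: hz; rewrite h normr0 => /eqP; rewrite eq_sym oner_eq0.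
set v0 := q.-root z; have v0q : v0 ^+ q = z by rewrite rootCK.
have [zeta pz] := C_prim_root_exists q0.
pose g (v : algC) := \sum_(l < q) v ^+ l.
pose vj (j : 'I_q) := v0 * zeta ^+ j.
have vjq j : vj j ^+ q = z.
  by rewrite /vj exprMn -exprM mulnC exprM (prim_expr_order pz) expr1n mulr1.
have sumg : \sum_(j < q) g (vj j) = \sum_(j < q) (1 : algC).
  rewrite /g exchange_big /=.
  rewrite (eq_bigr (fun l : 'I_q => v0 ^+ l * \sum_(j < q) (zeta ^+ l) ^+ j)); last first.
    by move=> l _; rewrite mulr_sumr; apply: eq_bigr => j _; rewrite /vj exprMn -!exprM mulnC.
  rewrite (bigD1 (Ordinal q0)) //= expr0 mul1r.
  under eq_bigr do rewrite expr1n.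
  rewrite [X in _ + X]big1 ?addr0 // => l hl0.
  have hl : zeta ^+ l != 1.
    rewrite -(prim_order_dvd pz); apply/negP => /dvdn_leq.
    have : (0 < l)%N by rewrite lt0n; apply: contra hl0 => /eqP hl; apply/eqP/val_inj.
    by move=> -> /(_ isT); rewrite leqNgt ltn_ord.
  have : (zeta ^+ l - 1) * \sum_(j < q) (zeta ^+ l) ^+ j = 0.
    by rewrite -subrX1 -exprM mulnC exprM (prim_expr_order pz) expr1n subrr.
  by move/eqP; rewrite mulf_eq0 subr_eq0 (negbTE hl) /= => /eqP ->; rewrite mulr0.
have [j hj] : exists j, 1 < `|g (vj j)|.
  case: (boolP [exists j, 1 < `|g (vj j)|]) => [/existsP //| /existsPn H]; exfalso.
  have H1 : forall j, true -> `|g (vj j)| <= 1 by move=> j _; rewrite real_leNgt ?H // ?realE ?normr_ge0 // ler01.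
  have Hg := normC_sum_upper H1 sumg.
  have gz j : vj j = z.
    have := Hg j isT; rewrite /g geom_split // => /(congr1 (fun x => x - 1)); rewrite addrC addKr subrr => /eqP.
    rewrite mulf_eq0 => /orP [hv0|hs].
      by move: (vjq j); rewrite (eqP hv0) expr0n eqn0Ngt q0 /= => /eqP; rewrite eq_sym (negbTE z0).
    have : vj j ^+ q.-1 - 1 = 0 by rewrite subrX1 (eqP hs) mulr0.
    move/eqP; rewrite subr_eq0 => /eqP h1.
    by rewrite -(vjq j) -(prednK q0) exprS h1 mulr1.
  have := gz (Ordinal q0); have := gz (Ordinal hq); rewrite /vj /= expr0 mulr1 expr1 => <-.
  move=> hh; have : v0 * (zeta - 1) == 0 by rewrite mulrBr mulr1 subr_eq0 -hh.
  rewrite mulf_eq0 subr_eq0 => /orP [hv|].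
    by move: v0q; rewrite (eqP hv) expr0n eqn0Ngt q0 /= => /eqP; rewrite eq_sym (negbTE z0).
  by rewrite -{1}(expr1 zeta) -(prim_order_dvd pz) dvdn1 => /eqP hq1; rewrite hq1 in hq.
exists (vj j); split; first exact: vjq.
have hv1 : `|vj j| = 1.
  by apply/eqP; rewrite -(pexpr_eq1 q0) // -normrX vjq hz.
have : `|vj j - 1| ^+ 2 < `|z - 1| ^+ 2.
  have -> : z - 1 = (vj j - 1) * g (vj j) by rewrite -subrX1 vjq.
  rewrite normrM exprMn -{1}(mulr1 (`|vj j - 1| ^+ 2)) ltr_pM2l.
    by rewrite expr_gt1.
  rewrite exprn_gt0 // normr_gt0 subr_eq0; apply/eqP => h.
  by move: hz1; rewrite -(vjq j) h expr1n eqxx.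
rewrite !norm1_sub1 // ltrD2l ltrN2 ltr_pM2l //.
Qed.

Lemma N1neq1 : (-1 : algC) != 1.
Proof.
by rewrite -subr_eq0 -opprD oppr_eq0 -mulr2n -mulr_natr mul1r pnatr_eq0.
Qed.

Lemma eps_prim m : (0 < m)%N -> m.-primitive_root (eps m).
Proof.
move=> m0; rewrite /eps; set z := m.-root (-1).
have zm : z ^+ m = -1 by rewrite rootCK.
have epsm : (z ^+ 2) ^+ m = 1 by rewrite -exprM mulnC exprM zm sqrrN expr1n.
have [k pk km] := prim_order_exists m0 epsm.
have k0 : (0 < k)%N := prim_order_gt0 pk.
case: (ltngtP k m) => [klt | kgt | <- //]; last first.
  by have := dvdn_leq m0 km; rewrite leqNgt kgt.
exfalso.
have ek : z ^+ (2 * k) = 1 by rewrite exprM (prim_expr_order pk).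
set q := (m %/ k)%N.
have mq : m = (k * q)%N by rewrite /q mulnC divnK.
have hzk : z ^+ k = -1.
  have : (z ^+ k) ^+ 2 == 1 by rewrite -exprM mulnC ek.
  rewrite sqrf_eq1 => /orP [/eqP h1|/eqP //].
  by move: zm; rewrite mq exprM h1 expr1n => h; move: N1neq1; rewrite -h eqxx.
have q2 : (1 < q)%N.
  case: q mq => [|[|q']] mq //.
    by move: m0; rewrite mq muln0.
  by move: klt; rewrite mq muln1 ltnn.
have hz1 : z != 1.
  by apply/eqP => h; move: hzk; rewrite h expr1n => h'; move: N1neq1; rewrite -h' eqxx.
have hz : `|z| = 1.
  by apply/eqP; rewrite -(pexpr_eq1 m0) // -normrX zm normrN normr1.
have [v [vq hv]] := strict_root q2 hz hz1.
have vm : v ^+ m = -1 by rewrite mq mulnC exprM vq hzk.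
case: (boolP (0 <= 'Im v)) => him.
  by have := rootC_Re_max m0 vm him; rewrite real_leNgt ?Creal_Re ?hv.
have vcm : v^* ^+ m = -1 by rewrite -rmorphXn vm rmorphN rmorph1.
have him' : 0 <= 'Im v^*.
  by rewrite Im_conj oppr_ge0; apply: ltW; rewrite real_ltNge ?Creal_Im ?real0.
by have := rootC_Re_max m0 vcm him'; rewrite Re_conj real_leNgt ?Creal_Re ?hv.
Qed.

Lemma comp_mpolyA n k l (p : {mpoly algC[n]}) (t : n.-tuple {mpoly algC[k]})
  (u : k.-tuple {mpoly algC[l]}) :
  (p \mPo t) \mPo u = p \mPo [tuple (tnth t i) \mPo u | i < n].
Proof.
rewrite [p \mPo t]comp_mpolyEX [X in _ = X \mPo _](mpolyE p) !raddf_sum /=.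
apply/eq_bigr => mm _; rewrite !comp_mpolyZ; congr (_ *: _).
rewrite comp_mpolyX rmorph_prod /= comp_mpolyX.
by apply/eq_bigr=> i _; rewrite rmorphXn /= tnth_mktuple.
Qed.

Lemma msym_comp n (s : 'S_n) (p : {mpoly algC[n]}) :
  msym s p = p \mPo [tuple 'X_(s i) | i < n].
Proof.
have := msym_mPo s p [tuple 'X_i | i < n]; rewrite comp_mpoly_id => ->.
by congr comp_mpoly; apply: eq_from_tnth => i; rewrite !tnth_mktuple.
Qed.

Lemma msymXs n (s : 'S_n) (i : 'I_n) : msym s ('X_i : {mpoly algC[n]}) = 'X_(s i).
Proof. by rewrite msym_comp comp_mpolyXU -tnth_nth tnth_mktuple. Qed.

Lemma meval_msym n (s : 'S_n) (p : {mpoly algC[n]}) (x : 'I_n -> algC) :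
  (msym s p).@[x] = p.@[fun i => x (s i)].
Proof.
rewrite msym_comp comp_mpoly_meval; apply: meval_eq => i.
by rewrite tnth_mktuple mevalXU.
Qed.

Definition rmod m (hm : (0 < m)%N) (k : nat) : 'I_m := Ordinal (ltn_pmod k hm).

Lemma msymY m n (hm : (0 < m)%N) (s : 'S_n) (sig : 'S_m) :
  (forall k : 'I_n, (s k %% m)%N = sig (rmod hm k)) ->
  forall r, msym s (@Y m n r) = @Y m n (sig r).
Proof.
move=> hs r; rewrite /Y raddf_sum /=.
under eq_bigr do rewrite msymXs.
rewrite (reindex_inj (@perm_inj _ s^-1)) /=.
apply: eq_big => k; last by move=> _; rewrite permKV.
have := hs (s^-1 k)%g; rewrite permKV => ->.
apply/eqP/eqP => [h|h]; first by congr (val (sig _)); apply: val_inj.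
by have := perm_inj (val_inj h) => <-.
Qed.

Lemma msymPsiY m n (hm : (0 < m)%N) (s : 'S_n) (sig : 'S_m) :
  (forall k : 'I_n, (s k %% m)%N = sig (rmod hm k)) ->
  msym s (PsiY m n) = msym sig (Psi m) \mPo mktuple (fun i : 'I_m => @Y m n i).
Proof.
move=> hs; rewrite msym_mPo msym_comp /PsiY comp_mpolyA.
congr comp_mpoly; apply: eq_from_tnth => i; rewrite !tnth_mktuple.
by rewrite -msym_comp (msymY hs).
Qed.

Lemma Yt_inj m n (hm : (0 < m)%N) (hmn : (m <= n)%N) (P Q : {mpoly algC[m]}) :
  P \mPo mktuple (fun i : 'I_m => @Y m n i) = Q \mPo mktuple (fun i : 'I_m => @Y m n i) ->
  P = Q.
Proof.
pose Zt : n.-tuple {mpoly algC[m]} :=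
  [tuple (if (i < m)%N then 'X_(rmod hm i) else 0) | i < n].
have hYZ r : (@Y m n r) \mPo Zt = 'X_r.
  rewrite /Y raddf_sum /= (bigD1 (widen_ord hmn r)) /=; last by rewrite modn_small.
  rewrite big1 ?addr0.
    rewrite comp_mpolyXU -tnth_nth tnth_mktuple /= ltn_ord; congr 'X_(_).
    by apply: val_inj; rewrite /= modn_small.
  move=> k /andP [hk hkr]; rewrite comp_mpolyXU -tnth_nth tnth_mktuple.
  case: ifP => // km; exfalso; move: hk hkr; rewrite modn_small // => /eqP hk.
  by move/eqP; apply; apply: val_inj.
move=> h; rewrite -(comp_mpoly_id P) -(comp_mpoly_id Q).
have e : [tuple 'X_i | i < m] =
    [tuple (tnth (mktuple (fun i : 'I_m => @Y m n i)) i) \mPo Zt | i < m].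
  by apply: eq_from_tnth => i; rewrite !tnth_mktuple hYZ.
by rewrite e -!comp_mpolyA h.
Qed.

Lemma sum_ind (T : finType) (P : pred T) (a : T) :
  \sum_(l | P l) ((l == a)%:R : algC) = (P a)%:R.
Proof.
rewrite big_mkcond (bigD1 a) //= eqxx big1 ?addr0; first by case: (P a).
by move=> l /negbTE ->; case: (P l).
Qed.

Lemma sum_ind2 (T : finType) (F : T -> algC) (a : T) :
  \sum_l F l * ((a == l)%:R) = F a.
Proof.
rewrite (bigD1 a) //= eqxx mulr1 big1 ?addr0 // => l hl.
by rewrite eq_sym (negbTE hl) mulr0.
Qed.

Lemma PsiY_eval m n (hm : (0 < m)%N) (k k' : 'I_n) :
  (PsiY m n).@[fun i => (i == k')%:R - (i == k)%:R] =
  \prod_(i < m | coprime i m)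
     (eps m ^+ (i * rmod hm k') - eps m ^+ (i * rmod hm k)).
Proof.
rewrite /PsiY comp_mpoly_meval /Psi rmorph_prod /=; apply: eq_bigr => i _.
rewrite rmorph_sum /=.
have hY j : (tnth (mktuple (fun i : 'I_m => @Y m n i)) j).@[fun i => (i == k')%:R - (i == k)%:R]
   = (rmod hm k' == j)%:R - (rmod hm k == j)%:R.
  rewrite tnth_mktuple /Y rmorph_sum /=.
  under eq_bigr do rewrite mevalXU.
  by rewrite sumrB !sum_ind.
under eq_bigr do rewrite mevalZ mevalXU hY mulrBr.
by rewrite sumrB !sum_ind2.
Qed.

Lemma exists_unit m : (0 < m)%N -> exists i : 'I_m, coprime i m.
Proof.
case: m => [//|[|m']] _; first by exists ord0.
by exists (Ordinal (isT : (1 < m'.+2)%N)); rewrite /= coprime1n.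
Qed.

Lemma prod_eps_eq0 m (hm : (0 < m)%N) (a b : 'I_m) :
  (\prod_(i < m | coprime i m) (eps m ^+ (i * a) - eps m ^+ (i * b)) == 0) = (a == b).
Proof.
apply/prodf_eq0/eqP => [[i ci h]|->].
  move: h; rewrite subr_eq0 !exprM.
  have pi := eps_prim hm; rewrite -(prim_root_exp_coprime i pi) in ci.
  rewrite (eq_prim_root_expr ci) !modn_small // => /eqP; exact: val_inj.
have [i ci] := exists_unit hm.
by exists i; rewrite ?subrr ?eqxx.
Qed.

Lemma stab_rel m n (hm : (0 < m)%N) (s : 'S_n) :
  msym s (PsiY m n) = PsiY m n ->
  forall k k' : 'I_n,
    (rmod hm (s k) == rmod hm (s k')) = (rmod hm k == rmod hm k').
Proof.
move=> hs k k'.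
have e : (PsiY m n).@[fun i => (i == s k')%:R - (i == s k)%:R] =
         (PsiY m n).@[fun i => (i == k')%:R - (i == k)%:R].
  rewrite -{1}hs meval_msym; apply: meval_eq => i.
  by rewrite !(inj_eq perm_inj).
move: e; rewrite !PsiY_eval => e.
by rewrite eq_sym -(prod_eps_eq0 hm) e prod_eps_eq0; apply/eqP/eqP.
Qed.

Lemma lt_ij m n (hmn : (m %| n)%N) (i : 'I_m) (j : 'I_(n %/ m)) : (i + m * j < n)%N.
Proof.
have hm : (0 < m)%N by case: m i {hmn j} => [[]|].
apply: (@leq_trans (m + m * j)); first by rewrite ltn_add2r ltn_ord.
rewrite addnC -mulnSr; rewrite [X in (_ <= X)%N](esym (divnK hmn)) mulnC leq_mul2r ltn_ord orbT //.
Qed.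

Lemma rmod_widen m n (hm : (0 < m)%N) (hmn : (m <= n)%N) (r : 'I_m) :
  rmod hm (widen_ord hmn r) = r.
Proof. by apply: val_inj; rewrite /= modn_small. Qed.

Lemma rmod_rmod m n (hm : (0 < m)%N) (hmn : (m <= n)%N) (k : 'I_n) :
  rmod hm (widen_ord hmn (rmod hm k)) = rmod hm k.
Proof. exact: rmod_widen. Qed.

Theorem lemma2p2 (m n : nat) :
  (0 < m)%N -> (m %| n)%N ->
  Stab (PsiY m n) = @wreath m n (Stab (Psi m)).
Proof.
move=> hm hmn; apply/setP => s; rewrite !inE.
apply/idP/idP.
- move=> /eqP hs.
  case: (posnP n) => [n0 | npos].
    apply/existsP; exists 1%g; apply/existsP; exists [ffun=> 1%g].
    rewrite inE msym1m eqxx /=; apply/forallP => i; apply/forallP => j.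
    by apply/forallP => k; move: (ltn_ord k); rewrite {2}n0.
  have hmn' : (m <= n)%N := dvdn_leq npos hmn.
  have hrel := stab_rel hm hs.
  pose sigf (r : 'I_m) : 'I_m := rmod hm (s (widen_ord hmn' r)).
  have sig_inj : injective sigf.
    move=> r r' /eqP; rewrite /sigf hrel !rmod_widen; exact: eqP.
  pose sig := perm sig_inj.
  have hsig k : (s k %% m)%N = sig (rmod hm k).
    rewrite permE /sigf.
    have /eqP -> : rmod hm (s (widen_ord hmn' (rmod hm k))) == rmod hm (s k).
      by rewrite hrel rmod_rmod.
    by [].
  have tauP (i : 'I_m) (j : 'I_(n %/ m)) :
      (s (Ordinal (lt_ij hmn i j)) %/ m < n %/ m)%N.
    by rewrite ltn_divLR // divnK.
  pose tauf i j : 'I_(n %/ m) := Ordinal (tauP i j).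
  have rmod_ij (i : 'I_m) (j : 'I_(n %/ m)) : rmod hm (Ordinal (lt_ij hmn i j)) = i.
    by apply: val_inj; rewrite /= addnC mulnC modnMDl modn_small.
  have tau_inj i : injective (tauf i).
    move=> j j' /(congr1 val) /= hj.
    have e1 := hsig (Ordinal (lt_ij hmn i j)); have e2 := hsig (Ordinal (lt_ij hmn i j')).
    rewrite !rmod_ij in e1 e2.
    have : s (Ordinal (lt_ij hmn i j)) = s (Ordinal (lt_ij hmn i j')).
      by apply: ord_inj; rewrite (divn_eq (s _) m) hj e1 -e2 -divn_eq.
    move/perm_inj/(congr1 val) => /= /eqP; rewrite eqn_add2l eqn_mul2l.
    by rewrite eqn0Ngt hm /= => /eqP /val_inj.
  apply/existsP; exists sig; apply/existsP; exists [ffun i => perm (tau_inj i)].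
  apply/andP; split.
    rewrite inE; apply/eqP; apply: (Yt_inj hm hmn').
    by rewrite -(msymPsiY hsig) hs.
  apply/forallP => i; apply/forallP => j; apply/forallP => k; apply/implyP => /eqP hk.
  have -> : k = Ordinal (lt_ij hmn i j) by apply: val_inj.
  have e := hsig (Ordinal (lt_ij hmn i j)); rewrite rmod_ij permE /sigf /= in e.
  rewrite ffunE !permE /= -e; apply/eqP.
  set K := s (Ordinal (lt_ij hmn i j)).
  by rewrite {1}(divn_eq K m) addnC [(m * _)%N]mulnC.
- case/existsP => sig /existsP [tau /andP [hsig /forallP H]].
  have hs : forall k : 'I_n, (s k %% m)%N = sig (rmod hm k).
    move=> k.
    have hj : (k %/ m < n %/ m)%N by rewrite ltn_divLR // divnK.
    have := H (rmod hm k); move=> /forallP /(_ (Ordinal hj)) /forallP /(_ k) /implyP.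
    rewrite /= {1}(divn_eq k m) addnC mulnC eqxx => /(_ isT) /eqP ->.
    by rewrite addnC mulnC modnMDl modn_small.
  rewrite (msymPsiY hs); rewrite inE in hsig; rewrite (eqP hsig).
  by [].
Qed.
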